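(* Let $n\ge2$ be an integer and let $A_1,\dots,A_{2n}$ be (not necessarily distinct) points in $\mathbb{R}^m$; set $A_{2n+1}=A_1$. Let $G_1$ be the centroid of the odd-indexed points $A_1,A_3,\dots,A_{2n-1}$ and $G_2$ the centroid of the even-indexed points $A_2,A_4,\dots,A_{2n}$. Then $$\sum_{i=1}^{2n}|A_iA_{i+1}|^2=\sum_{\substack{1\le i<j\le 2n\\ 1<j-i<2n-1}}(-1)^{j-i}|A_iA_j|^2+n^2|G_1G_2|^2.$$ In particular, for $n=2$ this is the identity $|A_1A_2|^2+|A_2A_3|^2+|A_3A_4|^2+|A_4A_1|^2=|A_1A_3|^2+|A_2A_4|^2+4|LM|^2$, where $L,M$ are the midpoints of $A_1A_3$ and $A_2A_4$.
   Context: $|XY|$ denotes the Euclidean distance in $\mathbb{R}^m$; the centroid of points $B_1,\dots,B_r$ is the point with position vector $\frac1r\sum_k B_k$. *)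

(* Defs.v *)
From mathcomp Require Import all_boot all_order all_algebra.
Set Implicit Arguments. Unset Strict Implicit. Unset Printing Implicit Defensive.
Import Order.TTheory GRing.Theory Num.Theory.
Local Open Scope ring_scope.

Definition edist (R : rcfType) (m : nat) (X Y : 'rV[R]_m) : R :=
  Num.sqrt (\sum_(k < m) (X 0 k - Y 0 k) ^+ 2).

Definition cyc (T : Type) (n : nat) (A : nat -> T) (i : nat) : T :=
  if i == (2 * n).+1 then A 1%N else A i.

Definition centroid (R : rcfType) (m r : nat) (B : nat -> 'rV[R]_m) : 'rV[R]_m :=
  r%:R^-1 *: \sum_(1 <= k < r.+1) B k.

(* Main.v *)
Require Import Defs.
From mathcomp Require Import all_boot all_order all_algebra.
From mathcomp Require Import zify ring.
Import Order.TTheory GRing.Theory Num.Theory.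
Local Open Scope ring_scope.

Lemma full_pairs (R : comNzRingType) (a s : nat -> R) N :
 \sum_(1 <= i < N.+1) \sum_(i.+1 <= j < N.+1) s i * s j * (a i - a j)^+2 =
 (\sum_(1<=i<N.+1) s i) * (\sum_(1<=i<N.+1) s i * a i ^+2)
   - (\sum_(1<=i<N.+1) s i * a i)^+2.
Proof.
elim: N => [|N IH]; first by rewrite !big_geq //; ring.
rewrite (big_nat_recr N.+1) //= [X in _ + X]big_geq // addr0.
rewrite (eq_big_nat _ _ (F2 := fun i => \sum_(i.+1 <= j < N.+1) s i * s j * (a i - a j)^+2
   + s i * s N.+1 * (a i - a N.+1)^+2)); last first.
  by move=> i /andP[hi1 hi2] /=; rewrite (big_nat_recr N.+1).
rewrite big_split /= IH (big_nat_recr N.+1 1 s) // (big_nat_recr N.+1 1 (fun i => s i * a i ^+ 2)) // (big_nat_recr N.+1 1 (fun i => s i * a i)) //=.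
have E : \sum_(1<=i<N.+1) s i * s N.+1 * (a i - a N.+1)^+2 =
  s N.+1 * (\sum_(1<=i<N.+1) s i * a i^+2) - 2%:R * s N.+1 * a N.+1 * (\sum_(1<=i<N.+1) s i * a i)
  + s N.+1 * a N.+1 ^+2 * (\sum_(1<=i<N.+1) s i).
  rewrite !mulr_sumr -sumrB -big_split /=; apply: eq_bigr => i _; ring.
rewrite E; ring.
Qed.

Lemma alt_zero (R : comNzRingType) n : \sum_(1 <= i < (2*n).+1) (-1 : R) ^+ i = 0.
Proof.
elim: n => [|n IH]; first by rewrite big_geq.
rewrite (_ : (2 * n.+1).+1 = (2*n).+3)%N; last lia.
rewrite (big_nat_recr (2*n).+2) //= (big_nat_recr (2*n).+1) //= IH add0r.
by rewrite !exprS; ring.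
Qed.

Lemma alt_split (R : comNzRingType) (a : nat -> R) n :
  \sum_(1 <= k < n.+1) a (2*k-1)%N - \sum_(1 <= k < n.+1) a (2*k)%N =
  - \sum_(1 <= i < (2*n).+1) (-1) ^+ i * a i.
Proof.
elim: n => [|n IH]; first by rewrite !big_geq // subrr oppr0.
rewrite (_ : (2 * n.+1).+1 = (2*n).+3)%N; last lia.
rewrite (big_nat_recr n.+1 1 (fun k => a (2*k-1)%N)) // (big_nat_recr n.+1 1 (fun k => a (2*k)%N)) // (big_nat_recr (2*n).+2) //= (big_nat_recr (2*n).+1) //=.
have ->: (2 * n.+1 - 1 = (2*n).+1)%N by lia.
have ->: (2 * n.+1 = (2*n).+2)%N by lia.
have h1 : (-1 : R) ^+ (2*n).+1 = -1 by rewrite exprS exprM sqrrN !expr1n mulr1.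
have h2 : (-1 : R) ^+ (2*n).+2 = 1 by rewrite 2!exprS exprM sqrrN !expr1n mulr1 mulrNN mulr1.
rewrite h1 h2.
set S1 := \sum_(1 <= k < n.+1) a (2*k-1)%N.
set S2 := \sum_(1 <= k < n.+1) a (2*k)%N.
set T := \sum_(1 <= i < (2*n).+1) _.
have : S1 - S2 = - T by [].
move=> H. have -> : S1 + a (2*n).+1 - (S2 + a (2*n).+2) = (S1 - S2) + a (2*n).+1 - a (2*n).+2 by ring.
rewrite H; ring.
Qed.

Lemma E_mid (R : comNzRingType) (a : nat -> R) n i : (2 <= n)%N -> (1 <= i < 2*n)%N ->
  \sum_(i.+1 <= j < (2*n).+1 | ~~ (1 < j - i < 2 * n - 1)%N) (-1) ^+ (j - i) * (a i - a j)^+2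
  = - (a i - a i.+1)^+2 + (if i == 1%N then (-1) ^+ (2*n - 1) * (a 1%N - a (2*n)%N)^+2 else 0).
Proof.
move=> hn /andP[hi1 hi2].
rewrite big_mkcond big_ltn; last lia.
rewrite subSnn /= expr1 mulN1r.
case: eqP => [ei|ne].
  subst i.
  rewrite (big_nat_recr (2*n)); last lia.
  rewrite /= ltnn andbF /=.
  rewrite big_nat_cond big1 ?add0r //.
  move=> j /andP[/andP[h1 h2] _].
  have -> : (1 < j - 1 < 2 * n - 1)%N = true by apply/andP; split; lia.
  by [].
rewrite big_nat_cond big1 ?addr0 //.
move=> j /andP[/andP[h1 h2] _].
have -> : (1 < j - i < 2 * n - 1)%N = true by apply/andP; split; lia.
by [].
Qed.

Lemma E_last (R : comNzRingType) (a : nat -> R) n :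
  \sum_((2*n).+1 <= j < (2*n).+1 | ~~ (1 < j - 2*n < 2 * n - 1)%N) (-1) ^+ (j - 2*n) * (a (2*n)%N - a j)^+2 = 0.
Proof. by rewrite big_geq. Qed.

Lemma sign_sub (R : comNzRingType) i j : (i <= j)%N -> (-1 : R) ^+ (j - i) = (-1) ^+ i * (-1) ^+ j.
Proof.
move=> h; rewrite -{2}(subnK h) exprD mulrCA -exprD.
rewrite (_ : (i + i = 2 * i)%N); last lia.
by rewrite exprM sqrrN !expr1n mulr1.
Qed.

Lemma scalar_main (R : comNzRingType) (a : nat -> R) n : (2 <= n)%N ->
 \sum_(1 <= i < (2*n).+1) (a i - cyc n a i.+1)^+2 =
 \sum_(1 <= i < (2*n).+1) \sum_(i.+1 <= j < (2*n).+1 | (1 < j - i < 2*n-1)%N)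
     (-1)^+(j-i) * (a i - a j)^+2
 + (\sum_(1<=k<n.+1) a (2*k-1)%N - \sum_(1<=k<n.+1) a (2*k)%N)^+2.
Proof.
move=> hn.
have full := @full_pairs R a (fun i => (-1) ^+ i) (2*n).
rewrite alt_zero mul0r sub0r in full.
have full' : \sum_(1 <= i < (2*n).+1) \sum_(i.+1 <= j < (2*n).+1) (-1)^+(j-i) * (a i - a j)^+2
   = - (\sum_(1<=k<n.+1) a (2*k-1)%N - \sum_(1<=k<n.+1) a (2*k)%N)^+2.
  rewrite alt_split sqrrN -full; apply: eq_big_nat => i hi; apply: eq_big_nat => j /andP[hj _].
  by rewrite sign_sub //; apply: ltnW.
set T := (_ - _)^+2 in full' *.
have split : forall i, \sum_(i.+1 <= j < (2*n).+1) (-1)^+(j-i) * (a i - a j)^+2 =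
   \sum_(i.+1 <= j < (2*n).+1 | (1 < j - i < 2*n-1)%N) (-1)^+(j-i) * (a i - a j)^+2 +
   \sum_(i.+1 <= j < (2*n).+1 | ~~ (1 < j - i < 2*n-1)%N) (-1)^+(j-i) * (a i - a j)^+2.
  by move=> i; rewrite (bigID (fun j => (1 < j - i < 2*n-1)%N)).
rewrite (eq_bigr _ (fun i _ => split i)) in full'.
rewrite big_split /= in full'.
set Rt := \sum_(1 <= i < (2*n).+1) \sum_(i.+1 <= j < (2*n).+1 | _) _ in full' *.
set Et := \sum_(1 <= i < (2*n).+1) _ in full'.
have HE : Et = - \sum_(1 <= i < 2*n) (a i - a i.+1)^+2 + (-1) ^+ (2*n - 1) * (a 1%N - a (2*n)%N)^+2.
  rewrite /Et (big_nat_recr (2*n)) /=; last lia.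
  rewrite E_last addr0.
  rewrite (eq_big_nat _ _ (F2 := fun i => - (a i - a i.+1)^+2 + (if i == 1%N then (-1) ^+ (2*n - 1) * (a 1%N - a (2*n)%N)^+2 else 0))); last first.
    by move=> i hi; rewrite E_mid.
  rewrite big_split /= sumrN; congr (_ + _).
  rewrite big_ltn; last lia.
  rewrite eqxx big_nat_cond big1 ?addr0 // => i /andP[/andP[h1 _] _].
  by case: eqP => // ei; rewrite ei in h1.
rewrite (big_nat_recr (2*n)) /=; last lia.
rewrite {2}/cyc eqxx.
rewrite (eq_big_nat _ _ (F2 := fun i => (a i - a i.+1)^+2)); last first.
  move=> i /andP[_ hi]; rewrite /cyc.
  by have -> : (i.+1 == (2*n).+1) = false by apply/eqP; lia.
have hs : (-1 : R) ^+ (2*n - 1) = -1.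
  rewrite (_ : (2*n - 1 = (2*(n-1)).+1)%N); last lia.
  by rewrite exprS exprM sqrrN !expr1n mulr1.
rewrite hs in HE.
rewrite HE in full'.
have -> : Rt = - T + (\sum_(1 <= i < 2*n) (a i - a i.+1)^+2 + (a 1%N - a (2*n)%N)^+2).
  by rewrite -full'; ring.
rewrite (_ : (a (2*n)%N - a 1%N)^+2 = (a 1%N - a (2*n)%N)^+2); last ring.
ring.
Qed.

Lemma edist2 (R : rcfType) m (X Y : 'rV[R]_m) :
  edist X Y ^+ 2 = \sum_(k < m) (X 0 k - Y 0 k) ^+ 2.
Proof. by rewrite /edist sqr_sqrtr // sumr_ge0 // => k _; apply: sqr_ge0. Qed.

Lemma centE (R : rcfType) m n (B : nat -> 'rV[R]_m) k :
  centroid n B 0 k = n%:R^-1 * \sum_(1 <= i < n.+1) B i 0 k.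
Proof. by rewrite /centroid mxE summxE. Qed.

Theorem corollary3p1 (R : rcfType) (m n : nat) (A : nat -> 'rV[R]_m) :
  (2 <= n)%N ->
  \sum_(1 <= i < (2 * n).+1) edist (A i) (cyc n A i.+1) ^+ 2 =
  \sum_(1 <= i < (2 * n).+1) \sum_(i.+1 <= j < (2 * n).+1 | (1 < j - i < 2 * n - 1)%N)
      (-1) ^+ (j - i) * edist (A i) (A j) ^+ 2
  + n%:R ^+ 2 * edist (centroid n (fun k => A (2 * k - 1)%N))
                      (centroid n (fun k => A (2 * k)%N)) ^+ 2.
Proof.
move=> hn.
have L : \sum_(1 <= i < (2 * n).+1) edist (A i) (cyc n A i.+1) ^+ 2 =
   \sum_(k < m) \sum_(1 <= i < (2 * n).+1) (A i 0 k - cyc n (fun j => A j 0 k) i.+1)^+2.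
  rewrite [RHS]exchange_big; apply: eq_bigr => i _; rewrite edist2; apply: eq_bigr => k _.
  by rewrite /cyc; case: ifP.
have Rr : \sum_(1 <= i < (2 * n).+1) \sum_(i.+1 <= j < (2 * n).+1 | (1 < j - i < 2 * n - 1)%N)
      (-1) ^+ (j - i) * edist (A i) (A j) ^+ 2 =
   \sum_(k < m) \sum_(1 <= i < (2 * n).+1) \sum_(i.+1 <= j < (2 * n).+1 | (1 < j - i < 2 * n - 1)%N)
      (-1) ^+ (j - i) * (A i 0 k - A j 0 k) ^+ 2.
  rewrite [RHS]exchange_big; apply: eq_bigr => i _; rewrite [RHS]exchange_big.
  by apply: eq_bigr => j _; rewrite edist2 mulr_sumr.
have C : n%:R ^+ 2 * edist (centroid n (fun k => A (2 * k - 1)%N))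
                      (centroid n (fun k => A (2 * k)%N)) ^+ 2 =
   \sum_(k < m) (\sum_(1<=i<n.+1) A (2*i-1)%N 0 k - \sum_(1<=i<n.+1) A (2*i)%N 0 k)^+2.
  rewrite edist2 mulr_sumr; apply: eq_bigr => k _; rewrite !centE.
  have hn0 : (n%:R : R) != 0 by rewrite pnatr_eq0; apply/eqP; lia.
  by rewrite -mulrBr exprMn mulrA -exprMn mulfV // expr1n mul1r.
rewrite L Rr C -big_split; apply: eq_bigr => k _.
exact: (@scalar_main R (fun j => A j 0 k) n hn).
Qed.
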